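(* Let $I\ge 1$ and let $\Delta_{>0}=\{P=(p_{i,j})_{1\le i,j\le I}: p_{i,j}>0,\ \sum_{i,j}p_{i,j}=1\}$. Then $\mathcal{M}_2\cap\Delta_{>0}\subseteq\mathcal{M}_1\cap\Delta_{>0}$.
   Context: $\mathcal{M}_1$ is the set of $I\times I$ matrices $P$ with non-negative entries summing to $1$ such that there exist non-negative vectors $\zeta^{(r)},\zeta^{(c)},\zeta^{(\gamma)}\in\mathbb{R}^I_{\ge 0}$ with $p_{i,j}=\zeta^{(r)}_i\zeta^{(c)}_j$ for $i\ne j$ and $p_{i,i}=\zeta^{(r)}_i\zeta^{(c)}_i\zeta^{(\gamma)}_i$. $\mathcal{M}_2$ is the set of $I\times I$ matrices of the form $P=\alpha cr^t+(1-\alpha)D$, where $r,c\in\mathbb{R}^I_{\ge0}$ each have entries summing to $1$, $D=\mathrm{diag}(d_1,\dots,d_I)$ with $d_i\ge0$ and $\sum_i d_i=1$, and $\alpha\in[0,1]$. *)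

(* Defs.v *)
From mathcomp Require Import all_boot all_order all_algebra.
Set Implicit Arguments. Unset Strict Implicit. Unset Printing Implicit Defensive.
Import Order.TTheory GRing.Theory Num.Theory.
Local Open Scope ring_scope.

Definition Delta_pos (R : realFieldType) (I : nat) (P : 'M[R]_I) : Prop :=
  (forall i j, 0 < P i j) /\ \sum_(i < I) \sum_(j < I) P i j = 1.

Definition M1 (R : realFieldType) (I : nat) (P : 'M[R]_I) : Prop :=
  (forall i j, 0 <= P i j) /\ \sum_(i < I) \sum_(j < I) P i j = 1 /\
  exists zr zc zg : 'I_I -> R,
    (forall i, 0 <= zr i) /\ (forall i, 0 <= zc i) /\ (forall i, 0 <= zg i) /\
    (forall i j, i != j -> P i j = zr i * zc j) /\
    (forall i, P i i = zr i * zc i * zg i).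

Definition M2 (R : realFieldType) (I : nat) (P : 'M[R]_I) : Prop :=
  exists (r c d : 'I_I -> R) (alpha : R),
    (forall i, 0 <= r i) /\ \sum_(i < I) r i = 1 /\
    (forall i, 0 <= c i) /\ \sum_(i < I) c i = 1 /\
    (forall i, 0 <= d i) /\ \sum_(i < I) d i = 1 /\
    0 <= alpha <= 1 /\
    (forall i j, P i j = alpha * (c i * r j) + (1 - alpha) * (if i == j then d i else 0)).

(* Main.v *)
Require Import Defs.
From mathcomp Require Import all_boot all_order all_algebra.
Import Order.TTheory GRing.Theory Num.Theory.
Local Open Scope ring_scope.

Theorem proposition3p7 (R : realFieldType) (I : nat) (HI : (1 <= I)%N) (P : 'M[R]_I) :
  M2 P /\ Delta_pos P -> M1 P /\ Delta_pos P.
Proof.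
move=> [[r [c [d [al [r0 [rs [c0 [cs [d0 [ds [/andP[a0 a1] HP]]]]]]]]]]] [Ppos Psum]].
split; last by [].
split; first by move=> i j; apply: ltW.
split; first by [].
have [I1|I2] := eqVneq I 1%N.
  exists (fun _ => 1), (fun _ => 1), (fun i => P i i).
  split; first by move=> i; exact: ler01.
  split; first by move=> i; exact: ler01.
  split; first by move=> i; apply: ltW.
  split; last by move=> i; rewrite !mul1r.
  move=> i j; subst I; by rewrite (ord1 i) (ord1 j) eqxx.
have other : forall i : 'I_I, exists j : 'I_I, i != j.
  move=> i; have HI2 : (1 < I)%N by rewrite ltn_neqAle eq_sym I2 HI.
  case: (eqVneq i (Ordinal HI2)) => [->|ne].
    exists (Ordinal HI). by apply/eqP => /(congr1 val).
  by exists (Ordinal HI2).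
exists (fun i => al * c i), r, (fun i => P i i / (al * c i * r i)).
split; first by move=> i; apply: mulr_ge0.
split; first by [].
split; first by move=> i; apply: divr_ge0; [apply: ltW | apply: mulr_ge0; [apply: mulr_ge0|]].
split.
  move=> i j ij; rewrite HP (negbTE ij) mulr0 addr0; by rewrite mulrA.
move=> i.
have nz1 : al * c i != 0.
  have [j ij] := other i; have := Ppos i j; rewrite HP (negbTE ij) mulr0 addr0 mulrA.
  by apply: contraTneq => ->; rewrite mul0r ltxx.
have nz2 : r i != 0.
  have [j ij] := other i; have := Ppos j i; rewrite HP eq_sym (negbTE ij) mulr0 addr0.
  by apply: contraTneq => ->; rewrite !mulr0 ltxx.
rewrite mulrC divfK //; exact: mulf_neq0.
Qed.
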